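(* Let $P=(V,\leq)$ be a poset whose incomparability graph is connected and locally finite. Then every chain of $P$ is order-embeddable into the chain $\mathbb{Z}$ of integers.
   Context: The incomparability graph of $P$ has vertex set $V$ and edges the pairs of distinct incomparable elements. A graph is locally finite if every vertex has finitely many neighbours. A chain of $P$ is a subset of pairwise comparable elements, with the induced order. *)

(* Defs.v *)
From Stdlib Require Import ZArith List Relations.

Definition is_poset {V : Type} (le : V -> V -> Prop) : Prop :=
  (forall x, le x x) /\
  (forall x y, le x y -> le y x -> x = y) /\
  (forall x y z, le x y -> le y z -> le x z).

Definition incomparable {V : Type} (le : V -> V -> Prop) (x y : V) : Prop :=
  x <> y /\ ~ le x y /\ ~ le y x.

Definition locally_finite {V : Type} (E : V -> V -> Prop) : Prop :=
  forall x, exists l : list V, forall y, E x y -> In y l.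

Definition connected_graph {V : Type} (E : V -> V -> Prop) : Prop :=
  forall x y, clos_refl_trans V E x y.

Definition is_chain {V : Type} (le : V -> V -> Prop) (C : V -> Prop) : Prop :=
  forall x y, C x -> C y -> le x y \/ le y x.

Definition order_embeddable_in_Z {V : Type} (le : V -> V -> Prop) (C : V -> Prop) : Prop :=
  exists f : V -> Z, forall x y, C x -> C y -> (le x y <-> (f x <= f y)%Z).

(* Main.v *)
Require Import Defs.
From Stdlib Require Import ZArith List Relations.
From Stdlib Require Import Classical ClassicalEpsilon Lia.

Lemma fin_sub {V : Type} (P : V -> Prop) (l : list V) :
  (forall y, P y -> In y l) -> exists l', NoDup l' /\ forall y, In y l' <-> P y.
Proof.
  revert P; induction l as [|a l IH]; intros P HP.
  - exists nil; split; [constructor|]. intros y; split; [intros []| intros Hy; exact (HP y Hy)].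
  - destruct (IH (fun y => P y /\ y <> a)) as [l' [Hnd Hl']].
    { intros y [Hy Hne]. destruct (HP y Hy) as [->|?]; [congruence|assumption]. }
    destruct (classic (P a)) as [Ha|Ha].
    + exists (a :: l'). split.
      * constructor; [intros H; apply Hl' in H; tauto | exact Hnd].
      * intros y; split.
        -- intros [<-|H]; [exact Ha| apply Hl' in H; tauto].
        -- intros Hy. destruct (classic (y = a)) as [->|Hne]; [left; reflexivity| right; apply Hl'; tauto].
    + exists l'. split; [exact Hnd|]. intros y; split.
        -- intros H; apply Hl' in H; tauto.
        -- intros Hy; apply Hl'; split; [exact Hy| intros ->; contradiction].
Qed.

Lemma cover {V : Type} (le : V -> V -> Prop) : is_poset le -> locally_finite (incomparable le) ->
  forall x y, clos_refl_trans_1n V (incomparable le) x y ->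
  exists l, forall c, le x c -> le c y -> In c l.
Proof.
  intros [Hr [Ha Ht]] Hlf x y H. induction H as [x|x z y Hxz Hzy IH].
  - exists (x::nil). intros c H1 H2. left. apply Ha; assumption.
  - destruct IH as [l Hl]. destruct (Hlf z) as [Nz HNz].
    exists (z :: Nz ++ l). intros c H1 H2.
    destruct (classic (z = c)) as [<-|Hne]; [left; reflexivity|]. right. apply in_or_app.
    destruct (classic (le z c)) as [Hzc|Hzc]; [right; apply Hl; assumption|].
    destruct (classic (le c z)) as [Hcz|Hcz].
    + exfalso. destruct Hxz as [_ [Hn _]]. apply Hn. eapply Ht; eassumption.
    + left. apply HNz. split; [exact Hne|split; assumption].
Qed.

Lemma interval {V : Type} le (C : V -> Prop) : is_poset le -> connected_graph (incomparable le) ->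
  locally_finite (incomparable le) ->
  forall a b, exists l, NoDup l /\ forall y, In y l <-> (C y /\ le a y /\ le y b).
Proof.
  intros Hp Hc Hlf a b.
  destruct (cover le Hp Hlf a b (clos_rt_rt1n _ _ _ _ (Hc a b))) as [l Hl].
  apply (fin_sub _ l). intros y [_ [H1 H2]]. exact (Hl y H1 H2).
Qed.

Lemma len_lt {V : Type} (l1 l2 : list V) z : NoDup l1 -> (forall y, In y l1 -> In y l2) ->
  In z l2 -> ~ In z l1 -> length l1 < length l2.
Proof.
  intros H1 H2 H3 H4. change (length (z::l1) <= length l2). apply NoDup_incl_length.
  - constructor; assumption.
  - intros y [<-|H]; auto.
Qed.

Lemma len_pos {V : Type} (l : list V) z : In z l -> 0 < length l.
Proof. destruct l; [intros []| simpl; lia]. Qed.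

Theorem mainTheorem5 (V : Type) (le : V -> V -> Prop) :
  is_poset le ->
  connected_graph (incomparable le) ->
  locally_finite (incomparable le) ->
  forall C : V -> Prop, is_chain le C -> order_embeddable_in_Z le C.
Proof.
  intros Hp Hc Hlf C HC. pose proof Hp as [Hr [Ha Ht]].
  destruct (classic (exists a0, C a0)) as [[a0 Ha0]|Hne].
  2:{ exists (fun _ => 0%Z). intros x y Hx; exfalso; eauto. }
  pose (SL := fun a b => proj1_sig (constructive_indefinite_description _ (interval le C Hp Hc Hlf a b))).
  assert (HSL : forall a b, NoDup (SL a b) /\ forall y, In y (SL a b) <-> (C y /\ le a y /\ le y b)).
  { intros a b; unfold SL; destruct (constructive_indefinite_description _ _); assumption. }
  clearbody SL.
  set (f := fun x => if excluded_middle_informative (le a0 x) then Z.of_nat (length (SL a0 x))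
                     else (- Z.of_nat (length (SL x a0)))%Z).
  exists f.
  assert (Hlt : forall x y, C x -> C y -> le x y -> x <> y -> (f x < f y)%Z).
  { intros x y Hx Hy Hxy Hne. unfold f.
    destruct (excluded_middle_informative (le a0 x)) as [H0x|H0x];
    destruct (excluded_middle_informative (le a0 y)) as [H0y|H0y].
    - apply Nat2Z.inj_lt. apply (len_lt _ _ y).
      + apply HSL.
      + intros z Hz; apply HSL in Hz; apply HSL. destruct Hz as [? [? ?]].
        split; [assumption|split; [assumption| eapply Ht; eassumption]].
      + apply HSL. auto.
      + intro H; apply HSL in H; destruct H as [_ [_ Hyx]]; apply Hne; apply Ha; auto.
    - exfalso; apply H0y; eapply Ht; eassumption.
    - assert (Hx0 : le x a0) by (destruct (HC x a0 Hx Ha0); [assumption| contradiction]).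
      assert (In y (SL a0 y)) by (apply HSL; auto).
      assert (In x (SL x a0)) by (apply HSL; auto).
      pose proof (len_pos _ _ H). pose proof (len_pos _ _ H0). lia.
    - assert (Hx0 : le x a0) by (destruct (HC x a0 Hx Ha0); [assumption| contradiction]).
      assert (Hy0 : le y a0) by (destruct (HC y a0 Hy Ha0); [assumption| contradiction]).
      cut (length (SL y a0) < length (SL x a0)); [lia|].
      apply (len_lt _ _ x).
      + apply HSL.
      + intros z Hz; apply HSL in Hz; apply HSL. destruct Hz as [Hz1 [Hz2 Hz3]].
        split; [assumption|split; [exact (Ht _ _ _ Hxy Hz2)| assumption]].
      + apply HSL. auto.
      + intro H; apply HSL in H; destruct H as [_ [Hyx _]]; apply Hne; apply Ha; auto. }
  intros x y Hx Hy; split.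
  - intros Hxy. destruct (classic (x = y)) as [<-|Hne]; [lia| specialize (Hlt x y Hx Hy Hxy Hne); lia].
  - intros Hf. destruct (HC x y Hx Hy) as [|Hyx]; [assumption|].
    destruct (classic (x = y)) as [<-|Hne]; [apply Hr|]. exfalso.
    pose proof (Hlt y x Hy Hx Hyx (fun e => Hne (eq_sym e))). lia.
Qed.
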